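(* Let $p,q\ge0$, $n=p+q\ge1$, $N=2^{\lfloor (n+1)/2\rfloor}$. Let $M\in\mathcal{G}^{\mathbb{C}}_{p,q}$ and $T:=M^\dagger M$. Then ${\rm rank}(M)=N$ if $C_{(N)}(M)\ne0$; for $k\in\{2,\dots,N-1\}$, ${\rm rank}(M)=k$ if $C_{(N)}(M)=0$, $C_{(j)}(T)=0$ for all $j=k+1,\dots,N-1$, and $C_{(k)}(T)\neq0$; ${\rm rank}(M)=1$ if $C_{(N)}(M)=0$, $C_{(j)}(T)=0$ for all $j=2,\dots,N-1$, and $M\ne0$; ${\rm rank}(M)=0$ if $M=0$.
   Context: Let $\mathcal{G}_{p,q}$ be the real Clifford algebra with identity $e$ and generators $e_1,\dots,e_n$ satisfying $e_ae_b+e_be_a=2\eta_{ab}e$, $\eta={\rm diag}(1,\dots,1,-1,\dots,-1)$ ($p$ ones, $q$ minus ones), basis elements $e_A=e_{a_1}\cdots e_{a_k}$ for $a_1<\dots<a_k$, and $\mathcal{G}^{\mathbb{C}}_{p,q}=\mathbb{C}\otimes\mathcal{G}_{p,q}$ with elements $M=\sum_A m_Ae_A$, $m_A\in\mathbb{C}$. Hermitian conjugation: $M^\dagger=\sum_A\overline{m_A}(e_A)^{-1}$. Let $\langle M\rangle_0$ denote the coefficient of $e$. Let $\beta$ be an algebra isomorphism from $\mathcal{G}^{\mathbb{C}}_{p,q}$ onto ${\rm Mat}(N,\mathbb{C})$ if $n$ is even, and onto block-diagonal matrices ${\rm diag}(X,Y)$, $X,Y\in{\rm Mat}(N/2,\mathbb{C})$,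 if $n$ is odd. The rank is ${\rm rank}(M):={\rm rank}(\beta(M))$, independent of $\beta$. The characteristic polynomial coefficients $C_{(k)}(M)$ are defined by $\det(\lambda I_N-\beta(M))=\lambda^N-C_{(1)}(M)\lambda^{N-1}-\cdots-C_{(N)}(M)$ (independent of $\beta$); equivalently by the recursion $M_{(1)}=M$, $C_{(k)}=\frac{N}{k}\langle M_{(k)}\rangle_0$, $M_{(k+1)}=M(M_{(k)}-C_{(k)})$, $k=1,\dots,N$. *)

(* Defs.v *)
(* Complexified Clifford algebra G^C_{p,q} realised on the
   coefficient space {ffun {set 'I_(p+q)} -> R[i]} (R a real closed field,
   in the theorem R : realType, so that R[i] is the field of complex numbers). *)
From HB Require Import structures.
From mathcomp Require Import all_boot all_order all_algebra.
From mathcomp Require Import complex.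
From mathcomp Require Import reals.
Set Implicit Arguments. Unset Strict Implicit. Unset Printing Implicit Defensive.
Import Order.TTheory GRing.Theory Num.Theory.
Local Open Scope ring_scope.

Section Clifford.
Variables (R : rcfType) (p q : nat).
Local Notation n := (p + q)%N.
Local Notation C := R[i].

(* elements M = sum_A m_A e_A ; the index set A ⊆ {0,...,n-1} stands for
   e_A = e_{a_1} ... e_{a_k} with a_1 < ... < a_k (0-based generators). *)
Definition cl := {ffun {set 'I_n} -> C}.

Definition eta (a : 'I_n) : C := if (a < p)%N then 1 else -1.

(* e_A e_B = (-1)^{#{(a,b) in A x B | b < a}} (prod_{c in A∩B} eta_cc) e_{A Δ B} *)
Definition cl_sign (A B : {set 'I_n}) : C :=
  (-1) ^+ #|[set ab : 'I_n * 'I_n | (ab.1 \in A) && (ab.2 \in B) && (ab.2 < ab.1)%N]|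
  * \prod_(c in A :&: B) eta c.

Definition cl_zero : cl := [ffun _ => 0].
Definition cl_one : cl := [ffun A => if A == set0 then 1 else 0].
Definition cl_add (x y : cl) : cl := [ffun A => x A + y A].
Definition cl_scale (c : C) (x : cl) : cl := [ffun A => c * x A].
Definition cl_mul (x y : cl) : cl :=
  [ffun D => \sum_(A : {set 'I_n}) \sum_(B : {set 'I_n} | (A :\: B) :|: (B :\: A) == D)
                x A * y B * cl_sign A B].

Definition scal_part (x : cl) : C := x set0.

(* (e_A)^{-1} = e_{a_k}^{-1} ... e_{a_1}^{-1} with e_a^{-1} = eta_aa e_a,
   i.e. (e_A)^{-1} = (-1)^{k(k-1)/2} (prod_{a in A} eta_aa) e_A, k = |A|. *)
Definition basis_inv_coef (A : {set 'I_n}) : C :=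
  (-1) ^+ 'C(#|A|, 2) * \prod_(a in A) eta a.

Definition cl_dag (x : cl) : cl := [ffun A => (x A)^* * basis_inv_coef A].

End Clifford.

Definition cl_N (n : nat) : nat := 2 ^ (n.+1)./2.

Definition block_diag_mx (R : nzRingType) (N : nat) (A : 'M[R]_N) : Prop :=
  forall i j : 'I_N, (i < N./2)%N != (j < N./2)%N -> A i j = 0.

Definition is_cl_iso (R : rcfType) (p q : nat)
    (beta : cl R p q -> 'M[R[i]]_(cl_N (p + q))) : Prop :=
  (forall x y, beta (cl_add x y) = beta x + beta y) /\
  (forall c x, beta (cl_scale c x) = c *: beta x) /\
  (forall x y, beta (cl_mul x y) = beta x *m beta y) /\
  beta (cl_one R p q) = 1%:M /\
  injective beta /\
  (forall A : 'M[R[i]]_(cl_N (p + q)),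
        (exists x, beta x = A) <->
        (if odd (p + q) then block_diag_mx A else True)).

(* C_(k)(M) defined by det(lambda I_N - beta(M)) = lambda^N - C_(1) lambda^{N-1} - ... - C_(N) *)
Definition charcoef (R : rcfType) (p q : nat)
    (beta : cl R p q -> 'M[R[i]]_(cl_N (p + q))) (k : nat) (x : cl R p q) : R[i] :=
  - (char_poly (beta x))`_(cl_N (p + q) - k).

(* Main.v *)
From Pilot Require Import Defs.
From HB Require Import structures.
From mathcomp Require Import all_boot all_order all_algebra.
From mathcomp Require Import complex.
From mathcomp Require Import reals.
From mathcomp Require Import zify ring.
Import Order.TTheory GRing.Theory Num.Theory.
Local Open Scope ring_scope.

Set Implicit Arguments. Unset Strict Implicit. Unset Printing Implicit Defensive.

Section MatL.
Variable F : fieldType.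

Lemma char_poly_block N n1 n2 (e : (n1 + n2)%N = N) (A : 'M[F]_N)
   (P : 'M[F]_(n1 + n2, N)) (B : 'M[F]_n2) :
  row_free P -> P *m A = block_mx 0 0 0 B *m P ->
  char_poly A = 'X^n1 * char_poly B.
Proof.
case: N / e in A P *; rewrite row_free_unit => Pu HPA.
set D := block_mx _ _ _ _ in HPA.
have eA : A = invmx P *m D *m P by rewrite -mulmxA -HPA mulmxA mulVmx // mul1mx.
have -> : char_poly A = char_poly D.
  rewrite /char_poly /char_poly_mx eA !map_mxM.
  set mP := map_mx polyC P; set mPi := map_mx polyC (invmx P).
  have hPP : mPi *m mP = 1%:M by rewrite -map_mxM mulVmx // map_mx1.
  have -> : ('X%:M : 'M[{poly F}]_(n1+n2)) = mPi *m 'X%:M *m mP.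
    by rewrite -mulmxA -scalar_mxC mulmxA hPP mul1mx.
  rewrite -mulmxBl -mulmxBr !det_mulmx mulrAC -det_mulmx hPP det1 mul1r.
  by rewrite -mulmxA -scalar_mxC mulmxA hPP mul1mx.
rewrite /D /char_poly char_block_diag_mx det_ublock.
congr (_ * _); rewrite /char_poly_mx map_mx0 subr0 det_scalar //.
Qed.

Lemma char_poly_kernel N (A : 'M[F]_N) :
  \rank (A *m A) = \rank A ->
  exists g : {poly F}, char_poly A = 'X^(N - \rank A) * g /\ g`_0 != 0.
Proof.
move=> Hr.
set K := kermx A.
have kerAA : (kermx (A *m A) <= K)%MS.
  have sub1 : (K <= kermx (A *m A))%MS.
    by apply/sub_kermxP; rewrite mulmxA; move/sub_kermxP: (submx_refl K) => ->; rewrite mul0mx.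
  have := mxrank_leqif_eq sub1; rewrite !mxrank_ker Hr => /leqif_refl.
  by move/andP => [].
have capK : (K :&: A)%MS = 0.
  apply/eqP; rewrite -submx0; apply/rV_subP => v; rewrite sub_capmx => /andP[vK /submxP[w ew]].
  rewrite submx0; move/sub_kermxP: vK; rewrite ew => wAA.
  have : (w <= kermx (A *m A))%MS by apply/sub_kermxP; rewrite mulmxA.
  by move/(submx_trans)/(_ kerAA)/sub_kermxP => ->.
set P := col_mx (row_base K) (row_base A).
have rankP : (\rank K + \rank A)%N = N by rewrite mxrank_ker subnK // rank_leq_col.
have Pfree : row_free P.
  rewrite /row_free /P -addsmxE.
  rewrite (mxrank_disjoint_sum); last first.
    apply/eqP; rewrite -submx0; apply/rV_subP => v; rewrite sub_capmx !eq_row_base.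
    by rewrite -sub_capmx capK.
  by rewrite !eq_row_base.
set Bm := row_base A *m A *m pinvmx (row_base A).
have eBm : Bm *m row_base A = row_base A *m A.
  by rewrite mulmxKpV // eq_row_base submxMl.
have rBm : \rank Bm = \rank A.
  rewrite -(mxrankMfree _ (row_base_free A)) eBm.
  apply/eqP; rewrite eqn_leq; apply/andP; split.
    by apply: leq_trans (rank_leq_row _) _; rewrite //.
  rewrite -{1}Hr -{1}(mulmx_base A) -mulmxA; exact: mxrankM_maxr.
have HPA : P *m A = block_mx 0 0 0 Bm *m P.
  rewrite /P mul_col_mx mul_block_col !mul0mx !add0r eBm.
  congr col_mx; apply/sub_kermxP; by rewrite eq_row_base.
exists (char_poly Bm); split.
  rewrite (char_poly_block rankP Pfree HPA); congr ('X^_ * _).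
  exact: mxrank_ker.
rewrite char_poly_det mulf_neq0 ?signr_eq0 //.
have : Bm \in unitmx by rewrite -row_free_unit /row_free rBm.
by rewrite unitmxE unitfE.
Qed.

Lemma rank_le_ker N (A B : 'M[F]_N) :
  (forall c : 'cV[F]_N, A *m c = 0 -> B *m c = 0) -> (\rank B <= \rank A)%N.
Proof.
move=> H.
have S : (kermx A^T <= kermx B^T)%MS.
  apply/row_subP => i; apply/sub_kermxP.
  set v := row i _.
  have : (v <= kermx A^T)%MS by exact: row_sub.
  move/sub_kermxP => vA.
  have : A *m v^T = 0 by rewrite -[A]trmxK -trmx_mul vA trmx0.
  move/H => Bv; by rewrite -[v]trmxK -trmx_mul Bv trmx0.
move: (mxrankS S); rewrite !mxrank_ker !mxrank_tr.
have := rank_leq_col A; have := rank_leq_col B. 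
move=> h1 h2 h3.
rewrite leq_sub2lE in h3 => //.
Qed.

End MatL.

Lemma sum_in (T : finType) (A : {set T}) : (\sum_b ((b \in A) : nat))%N = #|A|.
Proof. by rewrite -sum1_card [RHS]big_mkcond; apply: eq_bigr => b _; case: (b \in A). Qed.

Lemma card_pairs m (A : {set 'I_m}) :
  #|[set ab : 'I_m * 'I_m | (ab.1 \in A) && (ab.2 \in A) && (ab.2 < ab.1)%N]| = 'C(#|A|, 2).
Proof.
set f := fun a b : 'I_m => (((a \in A) && (b \in A) && (b < a))%N : nat).
have e1 : #|[set ab : 'I_m * 'I_m | (ab.1 \in A) && (ab.2 \in A) && (ab.2 < ab.1)%N]|
   = (\sum_a \sum_b f a b)%N.
  rewrite pair_bigA /= -sum1_card big_mkcond /=; apply: eq_bigr => ab _.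
  by rewrite inE /f; case: (_ && _).
have eall : (\sum_a \sum_b (f a b + f b a + ((a \in A) && (b == a) : nat)))%N
   = (\sum_a \sum_b ((a \in A) && (b \in A) : nat))%N.
  apply: eq_bigr => a _; apply: eq_bigr => b _.
  case: (eqVneq b a) => [->|nba].
    by rewrite /f ltnn !andbF andbb /= addn0 add0n; case: (a \in A).
  rewrite andbF addn0 /f; move: nba; rewrite -val_eqE /=.
  by case: (a \in A); case: (b \in A) => //=; case: ltngtP.
have eR : (\sum_a \sum_b ((a \in A) && (b \in A) : nat))%N = (#|A| * #|A|)%N.
  rewrite -[in RHS]sum_in big_distrl /=; apply: eq_bigr => x _.
  case: (x \in A) => /=; first by rewrite mul1n sum_in.
  by rewrite mul0n big1.
have eL : (\sum_a \sum_b (f a b + f b a + ((a \in A) && (b == a) : nat)))%N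
   = (\sum_a \sum_b f a b + \sum_a \sum_b f a b + #|A|)%N.
  rewrite -sum_in [X in (_ + X + _)%N]exchange_big /= -!big_split /=.
  apply: eq_bigr => x _; rewrite big_split /=; congr addn; first by rewrite big_split.
  rewrite (bigD1 x) //= ?eqxx ?andbT big1 ?addn0 // => i0 /negbTE ->.
  by rewrite andbF.
move: eall; rewrite eL eR e1 bin2; set X := (\sum_a _)%N; set k := #|A| => h.
have -> : (k * k.-1 = X.*2)%N by case: k h => [|k] /= h; lia.
by rewrite doubleK.
Qed.

Section Signs.
Variables (R : rcfType) (p q : nat).
Local Notation n := (p + q)%N.
Local Notation C := R[i].
Local Notation cl := (cl R p q).
Local Notation sgn := (@cl_sign R p q).
Local Notation etaR := (@Pilot.Defs.eta R p q).
Local Notation binv := (@basis_inv_coef R p q).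

Definition sd (A B : {set 'I_n}) := (A :\: B) :|: (B :\: A).

Lemma sdK A B : sd A (sd A B) = B.
Proof.
apply/setP => x; rewrite !inE.
by case: (x \in A); case: (x \in B).
Qed.

Lemma sd_eq A B D : (sd A B == D) = (B == sd A D).
Proof. by apply/eqP/eqP => [<-|->]; rewrite sdK. Qed.

Lemma sdAA A : sd A A = set0.
Proof. by apply/setP => x; rewrite !inE; case: (x \in A). Qed.

Lemma sd0A A : sd set0 A = A.
Proof. by apply/setP => x; rewrite !inE; case: (x \in A). Qed.

Lemma sd_inj A : injective (sd A).
Proof. by move=> B1 B2 e; rewrite -(sdK A B1) e sdK. Qed.

Lemma mulE (x y : cl) D :
  cl_mul x y D = \sum_A x A * y (sd A D) * sgn A (sd A D).
Proof.
rewrite ffunE; apply: eq_bigr => A _.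
by rewrite (big_pred1 (sd A D)) // => B; rewrite /= -sd_eq.
Qed.

Lemma eta_sq (a : 'I_n) : etaR a * etaR a = 1.
Proof. by rewrite /Pilot.Defs.eta; case: ifP => _; rewrite ?mulr1 ?mulrNN ?mulr1. Qed.

Lemma eta_conj (a : 'I_n) : (etaR a)^* = etaR a.
Proof. by rewrite /Pilot.Defs.eta; case: ifP => _; rewrite ?rmorph1 ?rmorphN1. Qed.

Lemma sign_conj A B : (sgn A B)^* = sgn A B.
Proof.
rewrite /sgn rmorphM rmorphXn rmorphN1 rmorph_prod; congr (_ * _).
by apply: eq_bigr => c _; rewrite /Pilot.Defs.eta; case: ifP => _; rewrite ?rmorph1 ?rmorphN1.
Qed.

Lemma sign_sq A B : sgn A B * sgn A B = 1.
Proof.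
rewrite /sgn mulrACA -exprMn mulrNN mulr1 expr1n mul1r -big_split /=.
by rewrite big1 // => c _; rewrite eta_sq.
Qed.

Lemma sign0A A : sgn set0 A = 1.
Proof.
rewrite /sgn set0I big_set0 mulr1.
rewrite (_ : [set _ | _] = set0) ?cards0 ?expr0 //.
by apply/setP => ab; rewrite !inE.
Qed.

Lemma inv_sign A : binv A = sgn A A.
Proof. by rewrite /basis_inv_coef /sgn setIid card_pairs. Qed.

Definition del (A : {set 'I_n}) : cl := [ffun B => (B == A)%:R].

Lemma mul_del A B : cl_mul (del A) (del B) = cl_scale (sgn A B) (del (sd A B)).
Proof.
apply/ffunP => D; rewrite mulE (bigD1 A) //= big1 ?addr0; last first.
  by move=> A' /negbTE nA; rewrite ffunE nA mul0r mul0r.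
rewrite !ffunE eqxx mul1r [sd A D == B]eq_sym -sd_eq [D == _]eq_sym.
by case: eqP => [<-|_]; rewrite ?sdK ?mul1r ?mulr1 ?mul0r ?mulr0.
Qed.

Definition ip (x y : cl) : C := \sum_A (x A)^* * y A.

Lemma ip_conj x y : (ip x y)^* = ip y x.
Proof.
rewrite /ip rmorph_sum; apply: eq_bigr => A _.
by rewrite rmorphM /= conjCK mulrC.
Qed.

Lemma ip_pos z : ip z z = 0 -> z = cl_zero R p q.
Proof.
move=> h; apply/ffunP => A; rewrite ffunE.
have H0 : forall B, xpredT B -> 0 <= (z B)^* * z B.
  by move=> B _; rewrite mulrC mul_conjC_ge0.
have := psumr_eq0P H0 h (i := A) isT.
by move/eqP; rewrite mulrC mul_conjC_eq0 => /eqP.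
Qed.

Lemma ip_x0 x : ip x (cl_zero R p q) = 0.
Proof. by rewrite /ip big1 // => A _; rewrite ffunE mulr0. Qed.

End Signs.

Section Beta.
Variables (R : rcfType) (p q : nat).
Local Notation n := (p + q)%N.
Local Notation C := R[i].
Local Notation cl := (cl R p q).
Local Notation sgn := (@cl_sign R p q).
Local Notation binv := (@basis_inv_coef R p q).
Local Notation zero := (cl_zero R p q).
Local Notation N := (cl_N (p + q)).
Variable beta : cl -> 'M[C]_N.
Hypothesis Hbeta : is_cl_iso beta.

Let bD : forall x y, beta (cl_add x y) = beta x + beta y.
Proof. by case: Hbeta. Qed.
Let bZ : forall c x, beta (cl_scale c x) = c *: beta x.
Proof. by case: Hbeta => _ []. Qed.
Let bM : forall x y, beta (cl_mul x y) = beta x *m beta y.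
Proof. by case: Hbeta => _ [] _ []. Qed.
Let binj : injective beta.
Proof. by case: Hbeta => _ [] _ [] _ [] _ []. Qed.
Let bimg : forall A : 'M[C]_N, (exists x, beta x = A) <->
        (if odd (p + q) then block_diag_mx A else True).
Proof. by case: Hbeta => _ [] _ [] _ [] _ []. Qed.

Lemma b0 : beta zero = 0.
Proof.
have e : cl_add zero zero = zero by apply/ffunP => A; rewrite !ffunE addr0.
have := bD zero zero; rewrite e => h.
by apply: (@addrI _ (beta zero)); rewrite -h addr0.
Qed.

Lemma cl_assoc (x y z : cl) : cl_mul x (cl_mul y z) = cl_mul (cl_mul x y) z.
Proof. by apply: binj; rewrite !bM mulmxA. Qed.

Lemma mulZl (c : C) (x y : cl) : cl_mul (cl_scale c x) y = cl_scale c (cl_mul x y).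
Proof. by apply: binj; rewrite bM !bZ bM scalemxAl. Qed.

Lemma mulZr (c : C) (x y : cl) : cl_mul x (cl_scale c y) = cl_scale c (cl_mul x y).
Proof. by apply: binj; rewrite bM !bZ bM scalemxAr. Qed.

Lemma sign_assoc A B : sgn A A = sgn A B * sgn A (sd A B).
Proof.
have := congr1 (fun f : cl => f B) (cl_assoc (del R A) (del R A) (del R B)).
rewrite /= !mul_del mulZr mulZl !mul_del !ffunE sdK sdAA sd0A sign0A eqxx.
by rewrite ?mulr1 ?mul1r => ->.
Qed.

Lemma sign_adj A B : sgn A B = binv A * sgn A (sd A B).
Proof. by rewrite inv_sign (sign_assoc A B) -mulrA sign_sq mulr1. Qed.


Lemma ADJ (x u v : cl) : ip (cl_mul x u) v = ip u (cl_mul (cl_dag x) v).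
Proof.
rewrite /ip.
under eq_bigr do rewrite mulE rmorph_sum mulr_suml.
rewrite exchange_big /=.
under [RHS]eq_bigr do rewrite mulE mulr_sumr.
rewrite [RHS]exchange_big /=.
apply: eq_bigr => A _.
rewrite (reindex_inj (@sd_inj p q A)) /=.
apply: eq_bigr => B _.
rewrite sdK ffunE rmorphM /= sign_conj rmorphM /= (sign_adj A B).
ring.
Qed.

Lemma ADJ' (x u v : cl) : ip (cl_mul (cl_dag x) u) v = ip u (cl_mul x v).
Proof. by rewrite -[LHS]ip_conj -ADJ ip_conj. Qed.

Lemma mulx0 (x : cl) : cl_mul x zero = zero.
Proof. by apply: binj; rewrite bM b0 mulmx0. Qed.

Lemma ALG1 (M u : cl) : cl_mul (cl_mul (cl_dag M) M) u = zero -> cl_mul M u = zero.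
Proof. by move=> h; apply: (ip_pos (z := cl_mul M u)); rewrite ADJ cl_assoc h ip_x0. Qed.

Lemma ALG2 (M u : cl) : let T := cl_mul (cl_dag M) M in
  cl_mul (cl_mul T T) u = zero -> cl_mul T u = zero.
Proof.
move=> T h; apply: (ip_pos (z := cl_mul T u)).
have eT : cl_mul T u = cl_mul (cl_dag M) (cl_mul M u) by rewrite cl_assoc.
by rewrite {1}eT ADJ' ADJ cl_assoc cl_assoc -/T h ip_x0.
Qed.

Definition sb (i j : 'I_N) : bool :=
  if odd (p + q) then (i < N./2)%N == (j < N./2)%N else true.

Definition Ecj (c : 'cV[C]_N) (j : 'I_N) : 'M[C]_N :=
  \matrix_(i, k) if (k == j) && sb i j then c i 0 else 0.

Lemma beta_blocky x : if odd (p + q) then block_diag_mx (beta x) else True.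
Proof. by apply/(bimg (beta x)).1; exists x. Qed.

Lemma Ecj_blocky c j : if odd (p + q) then block_diag_mx (Ecj c j) else True.
Proof.
case: ifP => // od i k hik; rewrite mxE.
case: (eqVneq k j) => [ekj|] //=; rewrite /sb od; rewrite ekj in hik.
by rewrite (negbTE hik).
Qed.

Lemma mul_Ecj (A : 'M[C]_N) c j :
  (if odd (p + q) then block_diag_mx A else True) ->
  A *m Ecj c j = Ecj (A *m c) j.
Proof.
move=> bA; apply/matrixP => i k; rewrite !mxE.
under eq_bigr do rewrite mxE.
case: (eqVneq k j) => [_|nkj] /=; last first.
  by rewrite big1 // => l _; rewrite mulr0.
rewrite /sb; move: bA; case: ifP => od bA /=; last first.
  by [] || (apply: eq_bigr).
case: (boolP ((i < N./2)%N == (j < N./2)%N)) => hij.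
  apply: eq_bigr => l _.
  case: (boolP ((l < N./2)%N == (j < N./2)%N)) => hl; rewrite ?mulr0 // bA ?mul0r //.
  by move: hij hl; case: (i < _)%N; case: (l < _)%N; case: (j < _)%N.
rewrite big1 // => l _.
case: (boolP ((l < N./2)%N == (j < N./2)%N)) => hl; rewrite ?mulr0 // bA ?mul0r //.
by move: hij hl; case: (i < _)%N; case: (l < _)%N; case: (j < _)%N.
Qed.

Lemma Ecj0 j : Ecj 0 j = 0.
Proof. by apply/matrixP => i k; rewrite !mxE; case: ifP. Qed.

Lemma Ecj_eq0 c : (forall j, Ecj c j = 0) -> c = 0.
Proof.
move=> h; apply/matrixP => i z; rewrite (ord1 z) mxE.
have := congr1 (fun M : 'M[C]_N => M i i) (h i); rewrite !mxE eqxx /sb.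
by case: (odd _); rewrite /= ?eqxx /=.
Qed.

Lemma COL (a b : cl) :
  (forall u, cl_mul a u = zero -> cl_mul b u = zero) ->
  forall c : 'cV[C]_N, beta a *m c = 0 -> beta b *m c = 0.
Proof.
move=> H c hc; apply: Ecj_eq0 => j.
have [u hu] : exists u, beta u = Ecj c j by apply/(bimg _).2/Ecj_blocky.
have hau : cl_mul a u = zero.
  by apply: binj; rewrite bM hu (mul_Ecj _ _ (beta_blocky a)) hc Ecj0 b0.
by rewrite -(mul_Ecj _ _ (beta_blocky b)) -hu -bM H // b0.
Qed.

End Beta.

Lemma main_rcf (R : rcfType) (p q : nat)
  (beta : cl R p q -> 'M[R[i]]_(cl_N (p + q))) (Hbeta : is_cl_iso beta)
  (M : cl R p q) :
  let N := cl_N (p + q) in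
  let T := cl_mul (cl_dag M) M in
  [/\ charcoef beta N M != 0 -> \rank (beta M) = N,
      forall k : nat, (2 <= k <= N - 1)%N ->
        charcoef beta N M = 0 ->
        (forall j : nat, (k + 1 <= j <= N - 1)%N -> charcoef beta j T = 0) ->
        charcoef beta k T != 0 -> \rank (beta M) = k,
      charcoef beta N M = 0 ->
        (forall j : nat, (2 <= j <= N - 1)%N -> charcoef beta j T = 0) ->
        M != cl_zero R p q -> \rank (beta M) = 1%N &
      M = cl_zero R p q -> \rank (beta M) = 0%N].
Proof.
move=> N T.
have bM : forall x y, beta (cl_mul x y) = beta x *m beta y by case: Hbeta => _ [] _ [].
have binj : injective beta by case: Hbeta => _ [] _ [] _ [] _ [].
set X := beta M.
have eTm : beta T = beta (cl_dag M) *m X := bM _ _.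
have r1 : \rank (beta T) = \rank X.
  apply/eqP; rewrite eqn_leq; apply/andP; split; first by rewrite eTm mxrankM_maxr.
  apply: rank_le_ker => c; exact: (COL Hbeta (a := T) (b := M) (fun u => @ALG1 _ _ _ _ Hbeta M u)).
have r2 : \rank (beta T *m beta T) = \rank (beta T).
  apply/eqP; rewrite eqn_leq mxrankM_maxr /=.
  apply: rank_le_ker => c; rewrite -bM.
  exact: (COL Hbeta (a := cl_mul T T) (b := T) (fun u => @ALG2 _ _ _ _ Hbeta M u)).
have [g [eg g0]] := char_poly_kernel r2.
set r := \rank (beta T) in eg r1 r2 *.
have rN : (r <= N)%N by exact: rank_leq_row.
have F1 : charcoef beta r T != 0.
  by rewrite /charcoef eg coefXnM ltnn subnn oppr_eq0.
have F2 : forall j, (r < j <= N)%N -> charcoef beta j T = 0.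
  move=> j /andP[h1 h2]; rewrite /charcoef eg coefXnM ifT ?oppr0 //; lia.
have detT : charcoef beta N M = 0 -> charcoef beta N T = 0.
  rewrite /charcoef !subnn !char_poly_det => /eqP; rewrite oppr_eq0 mulf_eq0 signr_eq0 /=.
  by move=> /eqP dX; rewrite eTm det_mulmx dX !mulr0 oppr0.
have Xnz : M != cl_zero R p q -> X != 0.
  move=> hM; apply/eqP => hX; move/negP: hM; apply; apply/eqP; apply: binj.
  by rewrite -/X hX (b0 Hbeta).
split.
- rewrite /charcoef subnn char_poly_det oppr_eq0 mulf_eq0 signr_eq0 /= => hd.
  by apply: mxrank_unit; rewrite unitmxE unitfE.
- move=> k /andP[hk1 hk2] hN hj hkT; rewrite -r1.
  have h0 := detT hN.
  case: (ltngtP r k) => // hrk.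
    by move: hkT; rewrite F2 ?eqxx //; apply/andP; split => //; lia.
  have : r = N \/ (r <= N - 1)%N by lia.
  case => [eN|hr]; first by move: F1; rewrite eN h0 eqxx.
  by move: F1; rewrite hj ?eqxx //; apply/andP; split => //; lia.
- move=> hN hj hM; rewrite -r1.
  have h0 := detT hN.
  have rnz : r != 0%N by rewrite r1 mxrank_eq0 Xnz.
  have : ~ (2 <= r)%N.
    move=> h2; have : r = N \/ (r <= N - 1)%N by lia.
    case => [eN|hr]; first by move: F1; rewrite eN h0 eqxx.
    by move: F1; rewrite hj ?eqxx //; apply/andP; split.
  lia.
- by move=> eM; rewrite /X eM (b0 Hbeta) mxrank0.
Qed.

Unset Implicit Arguments. Set Strict Implicit.

Theorem theorem4 (R : realType) (p q : nat) (Hn : (0 < p + q)%N)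
  (beta : cl R p q -> 'M[R[i]]_(cl_N (p + q))) (Hbeta : is_cl_iso beta)
  (M : cl R p q) :
  let N := cl_N (p + q) in
  let T := cl_mul (cl_dag M) M in
  [/\ charcoef beta N M != 0 -> \rank (beta M) = N,
      forall k : nat, (2 <= k <= N - 1)%N ->
        charcoef beta N M = 0 ->
        (forall j : nat, (k + 1 <= j <= N - 1)%N -> charcoef beta j T = 0) ->
        charcoef beta k T != 0 -> \rank (beta M) = k,
      charcoef beta N M = 0 ->
        (forall j : nat, (2 <= j <= N - 1)%N -> charcoef beta j T = 0) ->
        M != cl_zero R p q -> \rank (beta M) = 1%N &
      M = cl_zero R p q -> \rank (beta M) = 0%N].
Proof.
exact: main_rcf.
Qed.
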